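(* Let $L,k,n$ be positive integers with $2k<n$ and $q$ a prime power. Every $[n,k,L]_q$-AAD family $\mathcal F$ satisfies $|\mathcal F|\le 1+L\frac{q^{n-k}-1}{q^k-1}$. Consequently, for fixed $n,k,L$, $p^{AAD}(n,k,L)\le n-2k$.
   Context: An $[n,k,L]_q$-almost affinely disjoint (AAD) family is a family $\mathcal F$ of $k$-dimensional linear subspaces of $\mathbb F_q^n$ ($n>2k$) such that (1) any two distinct members intersect only in $\{0\}$, and (2) for every $S\in\mathcal F$ and every $\boldsymbol u\in\mathbb F_q^n\setminus S$, the affine subspace $\boldsymbol u+S$ has nonempty intersection with at most $L$ members of $\mathcal F$. $m^{AAD}_q(n,k,L)$ is the maximum size of such a family and $p^{AAD}(n,k,L)=\limsup_{q\to\infty}\log_q m^{AAD}_q(n,k,L)$, the limsup over prime powers $q$. *)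

(* Defs.v *)
From HB Require Import structures.
From mathcomp Require Import all_boot all_order all_algebra.
Set Implicit Arguments. Unset Strict Implicit. Unset Printing Implicit Defensive.
Import Order.TTheory GRing.Theory Num.Theory.
Local Open Scope ring_scope.

(* An [n,k,L]_q almost affinely disjoint family over the finite field F
   (q = #|F|), given as a duplicate-free list of k-dimensional linear
   subspaces of F^n = 'rV[F]_n such that
   (1) distinct members intersect only in {0};
   (2) for every S in the family and every u \notin S, the affine subspace
       u + S = {x | x - u \in S} meets at most L members of the family. *)
Definition affine_meets (F : finFieldType) (n : nat)
    (u : 'rV[F]_n) (S T : {vspace 'rV[F]_n}) : bool :=
  [exists x : 'rV[F]_n, (x \in T) && (x - u \in S)].

Definition AAD_family (F : finFieldType) (n k L : nat)
    (fam : seq {vspace 'rV[F]_n}) : Prop :=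
  [/\ uniq fam,
      (forall S, S \in fam -> \dim S = k),
      (forall S T, S \in fam -> T \in fam -> S != T -> (S :&: T = 0)%VS)
    & (forall S, S \in fam -> forall u : 'rV[F]_n, u \notin S ->
         (count (affine_meets u S) fam <= L)%N)].

(* Main.v *)
Require Import Defs.
From HB Require Import structures.
From mathcomp Require Import all_boot all_order all_algebra all_field zify.
Import Order.TTheory GRing.Theory Num.Theory.
Local Open Scope ring_scope.
From mathcomp Require Import reals exp sequences.

Lemma key (F : finFieldType) (n k L : nat) (fam : seq {vspace 'rV[F]_n}) S :
  AAD_family k L fam -> S \in fam ->
  ((size fam).-1 * (#|F| ^ k - 1) <= L * (#|F| ^ (n - k) - 1))%N.
Proof.
case=> Hu Hdim Hcap HL SF.
pose f : 'End('rV[F]_n) := (\1 - projv S)%VF.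
have fE x : f x = x - projv S x by rewrite add_lfunE opp_lfunE id_lfunE.
have kerf x : (f x == 0) = (x \in S).
  rewrite fE subr_eq0; apply/eqP/idP => [->|xS]; first exact: memv_proj.
  by rewrite projv_id.
have fB x y : f (x - y) = f x - f y by rewrite linearB.
have kerS : lker f = S by apply/vspaceP => x; rewrite memv_ker kerf.
have dimimg : \dim (limg f) = (n - k)%N.
  have := limg_ker_dim f fullv; rewrite capfv kerS (Hdim S SF) dimvf.
  move/(congr1 (subn^~ k)); rewrite addKn => ->.
  by congr (_ - _)%N; apply: mul1n.
pose fam' := filter (predC1 S) fam.
have sz : size fam' = (size fam).-1.
  have := count_predC (pred1 S) fam; rewrite /fam' size_filter.
  rewrite (count_uniq_mem _ Hu) SF => <-; by rewrite add1n.
pose Y := [set y in limg f] :\ 0.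
have cY : #|Y| = (#|F| ^ (n - k) - 1)%N.
  have := cardsD1 0 [set y in limg f]; rewrite inE mem0v cardsE card_vspace dimimg.
  by move=> ->; rewrite add1n subn1.
pose N (T : {vspace 'rV[F]_n}) := [set x in T] :\ 0.
have cN T : T \in fam -> #|N T| = (#|F| ^ k - 1)%N.
  move=> TF; have := cardsD1 0 [set x in T]; rewrite inE mem0v cardsE card_vspace Hdim //.
  by move=> ->; rewrite add1n subn1.
have cimg T : T \in fam' -> #|f @: N T| = (#|F| ^ k - 1)%N.
  rewrite mem_filter /= => /andP[TS TF]; rewrite card_in_imset ?cN //.
  move=> x y; rewrite !inE => /andP[_ xT] /andP[_ yT] /eqP.
  rewrite -subr_eq0 -fB kerf => xyS; apply/eqP; rewrite -subr_eq0 -memv0.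
  by rewrite -(Hcap T S TF SF TS) memv_cap xyS rpredB.
have subY T : T \in fam' -> f @: N T \subset Y.
  rewrite mem_filter /= => /andP[TS TF].
  apply/subsetP => y /imsetP[x]; rewrite !inE => /andP[x0 xT] ->.
  rewrite kerf memv_img ?memvf // andbT; apply: contra x0 => xS.
  by rewrite -memv0 -(Hcap T S TF SF TS) memv_cap xT.
have E1 : (\sum_(T <- fam') #|f @: N T| = (size fam).-1 * (#|F| ^ k - 1))%N.
  rewrite big_seq (eq_bigr (fun _ => (#|F| ^ k - 1)%N)); last by move=> T /cimg.
  by rewrite -big_seq big_const_seq count_predT sz iter_addn_0 mulnC.
have E2 T : T \in fam' -> #|f @: N T| = (\sum_(y in Y) (y \in f @: N T))%N.
  move=> TF; rewrite -big_mkcondr sum1_card; apply: eq_card => y /=.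
  by apply/idP/andP => [yI|[]//]; split=> //; exact: (subsetP (subY T TF)).
rewrite -E1 big_seq (eq_bigr _ (fun T TF => E2 T TF)) -big_seq exchange_big /= -cY.
rewrite [in X in (_ <= X)%N]mulnC -sum_nat_const.
apply: leq_sum => y Yy.
rewrite -big_mkcond /= sum1_count.
move: Yy; rewrite !inE => /andP[y0 /memv_imgP[u _ yu]].
have uS : u \notin S by rewrite -kerf -yu.
apply: leq_trans (HL S SF u uS); apply: leq_trans (leq_count_subseq _ (filter_subseq _ fam)).
apply: sub_count => T /imsetP[x]; rewrite !inE => /andP[_ xT] yx.
apply/existsP; exists x; rewrite xT /= -kerf fB -yx -yu subrr.
by [].
Qed.
Lemma natb q k n s L : (1 < q)%N -> (0 < k)%N -> (2 * k < n)%N ->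
  (s.-1 * (q ^ k - 1) <= L * (q ^ (n - k) - 1))%N ->
  (s <= (2 * L + 1) * q ^ (n - 2 * k))%N.
Proof.
move=> q1 k0 kn H.
have E : (q ^ (n - k) = q ^ (n - 2 * k) * q ^ k)%N by rewrite -expnD; congr expn; lia.
have a2 : (2 <= q ^ k)%N.
  case: (k) k0 => // k' _; rewrite expnS; have := expn_gt0 q k'; rewrite (ltnW q1); nia.
have b1 : (1 <= q ^ (n - 2 * k))%N by rewrite expn_gt0 ltnW.
rewrite E in H; move: H a2 b1.
set a := (q ^ k)%N; set b := (q ^ (n - 2 * k))%N => H a2 b1.
nia.
Qed.

Lemma fieldb (K : numFieldType) (s a b L : nat) : (1 < a)%N -> (1 <= b)%N ->
  (s.-1 * (a - 1) <= L * (b - 1))%N ->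
  (s%:R : K) <= 1 + L%:R * (b%:R - 1) / (a%:R - 1).
Proof.
move=> a1 b1 H.
have a0 : 0 < (a%:R : K) - 1 by rewrite subr_gt0 ltr1n.
case: s H => [|s] /= H.
  apply: addr_ge0 => //; apply: divr_ge0; last exact: ltW.
  by apply: mulr_ge0; rewrite ?subr_ge0 ?ler1n.
have ea : (a%:R : K) - 1 = (a - 1)%:R by rewrite natrB // ltnW.
have eb : (b%:R : K) - 1 = (b - 1)%:R by rewrite natrB.
rewrite mulrSr addrC lerD2l ler_pdivlMr // ea eb -!natrM ler_nat.
exact: H.
Qed.

Lemma key' (F : finFieldType) (n k L : nat) (fam : seq {vspace 'rV[F]_n}) :
  AAD_family k L fam ->
  ((size fam).-1 * (#|F| ^ k - 1) <= L * (#|F| ^ (n - k) - 1))%N.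
Proof.
case: fam => [|S fam'] H; first by [].
exact: (@key F n k L _ S H (mem_head _ _)).
Qed.

Arguments key' {F n k L fam}.
Arguments fieldb {K s a b L}.
Arguments natb {q k n s L}.

Theorem mainTheorem8 (R : realType) (n k L : nat) :
  (0 < L)%N -> (0 < k)%N -> (0 < n)%N -> (2 * k < n)%N ->
  (forall (F : finFieldType) (fam : seq {vspace 'rV[F]_n}),
     AAD_family k L fam ->
     ((size fam)%:R : rat) <=
       1 + L%:R * (((#|F| ^ (n - k))%N)%:R - 1) / (((#|F| ^ k)%N)%:R - 1))
  /\
  (* p^AAD(n,k,L) <= n - 2k, i.e. limsup_{q -> oo} log_q m_q(n,k,L) <= n - 2k *)
  (forall eps : R, 0 < eps ->
     exists Q : nat, forall (F : finFieldType), (Q <= #|F|)%N ->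
       forall fam : seq {vspace 'rV[F]_n}, AAD_family k L fam ->
         ((size fam)%:R : R) <= (#|F|%:R : R) `^ ((n - 2 * k)%:R + eps)).
Proof.
move=> L0 k0 n0 kn; split.
  move=> F fam Hf; apply: fieldb (key' Hf).
    by rewrite -{1}(expn0 #|F|) ltn_exp2l // finNzRing_gt1.
  by rewrite expn_gt0 ltnW // finNzRing_gt1.
move=> eps e0.
pose c := ln ((2 * L + 1)%:R : R).
pose M := expR (c / eps).
exists (Num.truncn M).+1 => F QF fam Hf.
have q1 := finNzRing_gt1 F.
have hs := natb q1 k0 kn (key' Hf).
apply: le_trans (_ : (((2 * L + 1) * #|F| ^ (n - 2 * k))%N)%:R <= _).
  by rewrite ler_nat.
have q0 : (0 : R) <= #|F|%:R by [].
rewrite natrM natrX powRD; last first.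
  by apply/implyP => _; rewrite pnatr_eq0 -lt0n ltnW.
rewrite powR_mulrn // mulrC ler_wpM2l ?exprn_ge0 //.
have ME : M `^ eps = (2 * L + 1)%:R.
  rewrite /M -expRM divfK ?gt_eqF // lnK //.
  by rewrite posrE ltr0n addn1.
rewrite -ME; apply: (ge0_ler_powR (ltW e0)).
- by rewrite nnegrE expR_ge0.
- by rewrite nnegrE ler0n.
apply: le_trans (ltW (truncnS_gt M)) _.
by rewrite ler_nat.
Qed.
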